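(* Let $(a_i)_{i\ge1}$ be a sequence of mild signature, let $(b_i)_{i\ge1}$ be any sequence of integers, and let $A$ be the associated replacement sequence. If $\alpha$ is a real number with $\sum_{i\ge1}\|\alpha b_i\|<\infty$, then the sequence of Weyl sums $x_n=\frac1n\sum_{i=0}^{n-1}e(\alpha A(i))$ converges to some complex number as $n\to\infty$.
   Context: $e(x)=e^{2\pi i x}$ and $\|x\|$ is the distance from $x$ to the nearest integer. Greedy representation: given an increasing sequence of positive integers $(a_i)$ with $a_1=1$, the base-$a_i$ representation of $n\ge0$ is obtained by repeatedly subtracting from what remains the largest $a_i$ that is at most what remains (the same $a_i$ may be used more than once), until $0$ is reached; this writes $n$ as a sum of terms $a_i$ with multiplicities. Mild signature: $(a_i)$ is an increasing sequence of positive integers with $a_1=1$ such that (1) there is a constant $L$ such that for every $n$, greedily writing $a_n$ as a sum of terms among $a_1,\dots,a_{n-1}$ (repeatedly subtracting the largest $a_i$ with $i\le n-1$ that is at most what remains) uses only $a_{n-1},\dots,a_{n-L}$, giving $a_n=c_1a_{n-1}+\dots+c_La_{n-L}$ with integers $c_j\ge0$ (which may depend on $n$); and (2) there are $r,s>1$ with $ra_n<a_{n+1}<sa_n$ for all $n$. Replacement sequence: $A(n)$ is obtained by writing $n$ in its greedy base-$a_i$ representation and replacing each occurrence of $a_i$ by $b_i$, i.e. if $n=\sum_i m_ia_i$ greedily then $A(n)=\sum_i m_ib_i$ (so $A(0)=0$). *)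

(* Defs.v *)
From Stdlib Require Import Reals ZArith Arith List.
From Coquelicot Require Import Coquelicot.
Open Scope R_scope.

(* Sequences are 0-indexed: a 0 plays the role of a_1, b 0 of b_1, etc. *)

Definition e (x : R) : C := (cos (2 * PI * x), sin (2 * PI * x)).

Definition dist_int (x : R) : R := Rmin (frac_part x) (1 - frac_part x).

(* largest i < k with a i <= m (0 if none) *)
Fixpoint top_below (a : nat -> nat) (m k : nat) : nat :=
  match k with
  | O => O
  | S k' => if Nat.leb (a k') m then k' else top_below a m k'
  end.

(* Greedy representation of m using terms a i with i < k: the list of
   indices used (with multiplicity), in the order they are subtracted.
   [fuel] bounds the number of steps (fuel = m suffices as a 0 = 1). *)
Fixpoint greedy_rep (a : nat -> nat) (k fuel m : nat) : list nat :=
  match fuel with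
  | O => nil
  | S f => if Nat.eqb m 0 then nil
           else let i := top_below a m k in i :: greedy_rep a k f (m - a i)
  end.

Definition strictly_increasing (a : nat -> nat) : Prop :=
  forall n, (a n < a (S n))%nat.

Definition mild_signature (a : nat -> nat) : Prop :=
  strictly_increasing a /\ a 0%nat = 1%nat /\
  (exists L : nat, forall n : nat, (1 <= n)%nat ->
     forall j, In j (greedy_rep a n (a n) (a n)) -> (n - L <= j)%nat) /\
  (exists r s : R, 1 < r /\ 1 < s /\
     forall n, r * INR (a n) < INR (a (S n)) < s * INR (a n)).

Definition replacement (a : nat -> nat) (b : nat -> Z) (n : nat) : Z :=
  fold_right Z.add 0%Z (map b (greedy_rep a (S n) n n)).

Definition weyl_sum (A : nat -> Z) (alpha : R) (n : nat) : C :=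
  Cmult (RtoC (/ INR n))
    (fold_right Cplus (RtoC 0) (map (fun i => e (alpha * IZR (A i))) (seq 0 n))).

(* Main.v *)
Require Import Defs.
From Stdlib Require Import Reals ZArith Arith List Lra Lia.
From Coquelicot Require Import Coquelicot.

Section Comb.
Variable a : nat -> nat.
Hypothesis Hinc : strictly_increasing a.
Hypothesis Ha0 : a 0%nat = 1%nat.

Lemma a_mono : forall i j, (i <= j)%nat -> (a i <= a j)%nat.
Proof.
  intros i j H; induction H; [lia|]. pose proof (Hinc m); lia.
Qed.

Lemma a_smono : forall i j, (i < j)%nat -> (a i < a j)%nat.
Proof.
  intros i j H. pose proof (Hinc i). pose proof (a_mono (S i) j H). lia.
Qed.

Lemma a_ge : forall i, (S i <= a i)%nat.
Proof.
  induction i; [lia|]. pose proof (Hinc i); lia.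
Qed.

Lemma tb_lt : forall m k, (0 < k)%nat -> (top_below a m k < k)%nat.
Proof.
  intros m k; induction k; simpl; intros; [lia|].
  destruct (Nat.leb (a k) m); [lia|].
  destruct k; [simpl; lia|]. specialize (IHk ltac:(lia)). lia.
Qed.

Lemma tb_a : forall m k, (1 <= m)%nat -> (a (top_below a m k) <= m)%nat.
Proof.
  intros m k Hm; induction k; simpl; [lia|].
  destruct (Nat.leb (a k) m) eqn:E; [apply Nat.leb_le in E; lia| exact IHk].
Qed.

Lemma tb_max : forall m k j, (top_below a m k < j < k)%nat -> (m < a j)%nat.
Proof.
  intros m k; induction k; simpl; intros j Hj; [lia|].
  destruct (Nat.leb (a k) m) eqn:E; [lia|].
  apply Nat.leb_gt in E.
  destruct (Nat.eq_dec j k); [subst; lia|]. apply IHk; lia.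
Qed.

Lemma tb_ext : forall m k d, (m < a k)%nat -> top_below a m (k + d) = top_below a m k.
Proof.
  intros m k d H; induction d; [rewrite Nat.add_0_r; reflexivity|].
  rewrite Nat.add_succ_r; simpl.
  destruct (Nat.leb (a (k + d)) m) eqn:E; [|exact IHd].
  apply Nat.leb_le in E. pose proof (a_mono k (k+d) ltac:(lia)). lia.
Qed.

Lemma tb_stable : forall m k k', (m < a k)%nat -> (m < a k')%nat ->
  top_below a m k = top_below a m k'.
Proof.
  intros m k k' H H'.
  destruct (Nat.le_ge_cases k k') as [L|L].
  - replace k' with (k + (k' - k))%nat by lia. apply eq_sym, tb_ext; auto.
  - replace k with (k' + (k - k'))%nat by lia. apply tb_ext; auto.
Qed.

Lemma gr_stable : forall f m k f' k', (m <= f)%nat -> (m <= f')%nat ->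
  (m < a k)%nat -> (m < a k')%nat ->
  greedy_rep a k f m = greedy_rep a k' f' m.
Proof.
  induction f; intros m k f' k' H1 H2 H3 H4.
  - assert (m = 0%nat) by lia; subst. destruct f'; reflexivity.
  - destruct m as [|m0].
    + destruct f'; reflexivity.
    + destruct f' as [|f0']; [lia|]. cbn [greedy_rep Nat.eqb].
      rewrite (tb_stable (S m0) k k' H3 H4).
      f_equal. apply IHf.
      * pose proof (a_mono 0 (top_below a (S m0) k') ltac:(lia)). rewrite Ha0 in H. lia.
      * pose proof (a_mono 0 (top_below a (S m0) k') ltac:(lia)). rewrite Ha0 in H. lia.
      * lia.
      * lia.
Qed.

Definition Tp (m : nat) : nat := top_below a m (S m).
Definition Rp (m : nat) : list nat := greedy_rep a (S m) m m.

Lemma Tp_spec : forall m, (1 <= m)%nat -> (a (Tp m) <= m < a (S (Tp m)))%nat.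
Proof.
  intros m Hm. unfold Tp. split; [apply tb_a; auto|].
  pose proof (tb_lt m (S m) ltac:(lia)).
  destruct (Nat.eq_dec (S (top_below a m (S m))) (S m)) as [E|E].
  - rewrite E. pose proof (a_ge (S m)). lia.
  - apply (tb_max m (S m)). lia.
Qed.

Lemma Tp_unique : forall m i, (a i <= m < a (S i))%nat -> Tp m = i.
Proof.
  intros m i H.
  assert (1 <= m)%nat by (pose proof (a_ge i); lia).
  pose proof (Tp_spec m H0).
  destruct (Nat.lt_trichotomy (Tp m) i) as [L|[L|L]]; auto.
  - pose proof (a_mono (S (Tp m)) i L). lia.
  - pose proof (a_mono (S i) (Tp m) L). lia.
Qed.

Lemma Rp_step : forall m, (1 <= m)%nat -> Rp m = Tp m :: Rp (m - a (Tp m)).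
Proof.
  intros m Hm. unfold Rp. destruct m as [|m0]; [lia|].
  simpl greedy_rep at 1. fold (Tp (S m0)). f_equal.
  pose proof (tb_a (S m0) (S (S m0)) Hm). fold (Tp (S m0)) in H.
  pose proof (a_mono 0 (Tp (S m0)) ltac:(lia)). rewrite Ha0 in H0.
  apply gr_stable; try lia.
  - pose proof (a_ge (S (S m0))); lia.
  - pose proof (a_ge (S (S m0 - a (Tp (S m0))))); lia.
Qed.

Lemma Rp_0 : Rp 0 = nil.
Proof. reflexivity. Qed.

Lemma Rp_in : forall m j, In j (Rp m) -> (a j <= m)%nat.
Proof.
  intro m. induction m as [m IH] using lt_wf_ind. intros j Hj.
  destruct m as [|m0]; [rewrite Rp_0 in Hj; destruct Hj|].
  rewrite Rp_step in Hj by lia. pose proof (Tp_spec (S m0) ltac:(lia)).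
  destruct Hj as [E|E]; [subst; lia|].
  pose proof (a_mono 0 (Tp (S m0)) ltac:(lia)). rewrite Ha0 in H0.
  specialize (IH (S m0 - a (Tp (S m0)))%nat ltac:(lia) j E). lia.
Qed.

Lemma mild_rep : forall i, (1 <= i)%nat ->
  greedy_rep a i (a i) (a i) = (i - 1)%nat :: Rp (a i - a (i - 1)).
Proof.
  intros i Hi. pose proof (a_ge i).
  destruct (a i) as [|f] eqn:Ea; [lia|].
  simpl greedy_rep at 1.
  destruct i as [|i0]; [lia|]. simpl top_below.
  assert (a i0 < S f)%nat by (rewrite <- Ea; apply Hinc).
  replace (Nat.leb (a i0) (S f)) with true by (symmetry; apply Nat.leb_le; lia).
  replace (S i0 - 1)%nat with i0 by lia. f_equal.
  unfold Rp. pose proof (a_mono 0 i0 ltac:(lia)). rewrite Ha0 in H1.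
  apply gr_stable; try lia.
  pose proof (a_ge (S (S f - a i0))); lia.
Qed.

End Comb.

Lemma e_add : forall x y, e (x + y) = Cmult (e x) (e y).
Proof.
  intros x y. unfold e, Cmult; simpl.
  replace (2 * PI * (x + y)) with (2 * PI * x + 2 * PI * y) by ring.
  rewrite cos_plus, sin_plus. f_equal; ring.
Qed.

Lemma Cmod_e : forall x, Cmod (e x) = 1.
Proof.
  intros x. unfold e, Cmod; simpl.
  pose proof (sin2_cos2 (2 * PI * x)). unfold Rsqr in H.
  assert (E : cos (2*PI*x) * (cos (2*PI*x) * 1) + sin (2*PI*x) * (sin (2*PI*x) * 1) = 1)
    by (rewrite <- H at 3; ring).
  rewrite E. apply sqrt_1.
Qed.

Lemma fold_Cplus : forall (l : list C) x, fold_right Cplus x l = Cplus (fold_right Cplus (RtoC 0) l) x.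
Proof.
  induction l; intros x; simpl.
  - ring.
  - rewrite IHl. ring.
Qed.

Section Sums.
Variable a : nat -> nat.
Variable b : nat -> Z.
Variable alpha : R.
Hypothesis Hinc : strictly_increasing a.
Hypothesis Ha0 : a 0%nat = 1%nat.

Definition Aa (m : nat) : Z := replacement a b m.

Lemma A_step : forall m, (1 <= m)%nat -> Aa m = (b (Tp a m) + Aa (m - a (Tp a m)))%Z.
Proof.
  intros m Hm. unfold Aa, replacement. fold (Rp a m).
  fold (Rp a (m - a (Tp a m))). rewrite Rp_step by auto. reflexivity.
Qed.

Definition fv (m : nat) : C := e (alpha * IZR (Aa m)).

Fixpoint Ssum (n : nat) : C :=
  match n with O => RtoC 0 | S n' => Cplus (Ssum n') (fv n') end.

Lemma weyl_eq : forall n, weyl_sum Aa alpha n = Cmult (RtoC (/ INR n)) (Ssum n).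
Proof.
  intros n. unfold weyl_sum. f_equal.
  induction n; [reflexivity|].
  rewrite seq_S, map_app, fold_right_app. simpl.
  rewrite fold_Cplus, IHn. unfold fv. ring.
Qed.

Lemma Ssum_bound : forall n, Cmod (Ssum n) <= INR n.
Proof.
  induction n; simpl Ssum.
  - rewrite Cmod_0. simpl; lra.
  - eapply Rle_trans; [apply Cmod_triangle|]. unfold fv. rewrite Cmod_e, S_INR. lra.
Qed.

Lemma block : forall i n, (a i <= n <= a (S i))%nat ->
  Ssum n = Cplus (Ssum (a i)) (Cmult (e (alpha * IZR (b i))) (Ssum (n - a i))).
Proof.
  intros i n [H1 H2].
  destruct (Nat.le_exists_sub (a i) n H1) as [d [Hd _]].
  rewrite Nat.add_comm in Hd. subst n. clear H1.
  replace (a i + d - a i)%nat with d by lia.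
  induction d.
  - rewrite Nat.add_0_r. simpl. ring.
  - rewrite Nat.add_succ_r. simpl Ssum. rewrite IHd by lia.
    unfold fv. rewrite A_step.
    + rewrite (Tp_unique a Hinc Ha0 (a i + d) i) by lia.
      replace (a i + d - a i)%nat with d by lia.
      rewrite plus_IZR, Rmult_plus_distr_l, e_add. ring.
    + pose proof (a_ge a Hinc Ha0 i). lia.
Qed.

End Sums.

Lemma e_nat : forall t k, e (t + INR k) = e t.
Proof.
  intros t k. unfold e.
  replace (2 * PI * (t + INR k)) with (2 * PI * t + 2 * INR k * PI) by ring.
  rewrite cos_period, sin_period. reflexivity.
Qed.

Lemma e_int : forall z t, e (IZR z + t) = e t.
Proof.
  intros z t. destruct (Z_le_gt_dec 0 z) as [H|H].
  - rewrite <- (Z2Nat.id z H), <- INR_IZR_INZ, Rplus_comm. apply e_nat.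
  - assert (Hz : (0 <= - z)%Z) by lia.
    pose proof (e_nat (IZR z + t) (Z.to_nat (- z))) as E.
    rewrite INR_IZR_INZ, Z2Nat.id, opp_IZR in E by exact Hz.
    replace (IZR z + t + - IZR z) with t in E by ring. auto.
Qed.

Lemma one_minus_cos : forall u, 1 - cos u <= u * u / 2.
Proof.
  intros u. destruct (Rle_lt_dec (Rabs u) 2) as [H|H].
  - assert (-2 <= u <= 2) by (unfold Rabs in H; destruct (Rcase_abs u); lra).
    pose proof (pre_cos_bound u 0 ltac:(lra) ltac:(lra)) as [H1 _].
    unfold cos_approx, cos_term in H1. simpl in H1. lra.
  - pose proof (COS_bound u).
    assert (2 * 2 < u * u).
    { unfold Rabs in H; destruct (Rcase_abs u); nra. }
    lra.
Qed.

Lemma Cmod_le_pair : forall x y c, 0 <= c -> x * x + y * y <= c * c -> Cmod (x, y) <= c.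
Proof.
  intros x y c Hc H. unfold Cmod; simpl.
  rewrite <- (sqrt_square c Hc). apply sqrt_le_1_alt. lra.
Qed.

Lemma e_small : forall t, Cmod (Cminus (e t) (RtoC 1)) <= 2 * PI * Rabs t.
Proof.
  intros t. unfold e, Cminus, Cplus, Copp, RtoC; simpl.
  pose proof PI_RGT_0.
  apply Cmod_le_pair.
  - pose proof (Rabs_pos t). nra.
  - pose proof (sin2_cos2 (2 * PI * t)). unfold Rsqr in H0.
    pose proof (one_minus_cos (2 * PI * t)).
    replace (2 * PI * Rabs t * (2 * PI * Rabs t)) with ((2 * PI * t) * (2 * PI * t)).
    + nra.
    + unfold Rabs; destruct (Rcase_abs t); ring.
Qed.

Lemma delta_bound : forall x, Cmod (Cminus (e x) (RtoC 1)) <= 2 * PI * dist_int x.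
Proof.
  intros x. pose proof PI_RGT_0.
  pose proof (Rplus_Int_part_frac_part x) as Ex.
  pose proof (base_Int_part x) as [B1 B2].
  assert (F0 : 0 <= frac_part x) by (unfold frac_part; lra).
  assert (F1 : frac_part x < 1) by (unfold frac_part; lra).
  assert (Ea : e x = e (frac_part x)) by (rewrite Ex at 1; apply e_int).
  assert (Eb : e x = e (frac_part x - 1)).
  { rewrite Ex at 1. replace (IZR (Int_part x) + frac_part x) with
      (IZR (Int_part x + 1) + (frac_part x - 1)) by (rewrite plus_IZR; ring).
    apply e_int. }
  unfold dist_int, Rmin. destruct (Rle_dec (frac_part x) (1 - frac_part x)).
  - rewrite Ea. eapply Rle_trans; [apply e_small|]. rewrite Rabs_right by lra. lra.
  - rewrite Eb. eapply Rle_trans; [apply e_small|]. rewrite Rabs_left1 by lra. lra.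
Qed.

Fixpoint rsum (f : nat -> R) (i len : nat) : R :=
  match len with O => 0 | S l => rsum f i l + f (i + l)%nat end.

Definition CS (f : nat -> R) : Prop :=
  (forall j, 0 <= f j) /\
  forall eps, 0 < eps -> exists N, forall i len, (N <= i)%nat -> rsum f i len <= eps.

Lemma rsum_nonneg : forall f i len, (forall j, 0 <= f j) -> 0 <= rsum f i len.
Proof. intros f i len H; induction len; simpl; [lra|]. specialize (H (i+len)%nat); lra. Qed.

Lemma rsum_le : forall f g i len, (forall j, f j <= g j) -> rsum f i len <= rsum g i len.
Proof. intros f g i len H; induction len; simpl; [lra|]. specialize (H (i+len)%nat); lra. Qed.

Lemma rsum_add : forall f g i len, rsum (fun j => f j + g j) i len = rsum f i len + rsum g i len.
Proof. intros f g i len; induction len; simpl; lra. Qed.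

Lemma rsum_scal : forall c f i len, rsum (fun j => c * f j) i len = c * rsum f i len.
Proof. intros c f i len; induction len; simpl; [ring|]. rewrite IHlen; ring. Qed.

Lemma rsum_shift : forall f k i len, (k <= i)%nat ->
  rsum (fun j => f (j - k)%nat) i len = rsum f (i - k) len.
Proof.
  intros f k i len H; induction len; simpl; [ring|]. rewrite IHlen.
  replace (i + len - k)%nat with (i - k + len)%nat by lia. ring.
Qed.

Lemma CS_le : forall f g, (forall j, 0 <= g j <= f j) -> CS f -> CS g.
Proof.
  intros f g H [H0 H1]. split; [intros j; apply H|].
  intros eps He. destruct (H1 eps He) as [N HN]. exists N. intros i len Hi.
  eapply Rle_trans; [apply rsum_le with (g := f); intros; apply H|]. auto.
Qed.

Lemma CS_add : forall f g, CS f -> CS g -> CS (fun j => f j + g j).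
Proof.
  intros f g [F0 F1] [G0 G1]. split; [intros j; specialize (F0 j); specialize (G0 j); lra|].
  intros eps He. destruct (F1 (eps/2) ltac:(lra)) as [N1 HN1].
  destruct (G1 (eps/2) ltac:(lra)) as [N2 HN2]. exists (N1 + N2)%nat.
  intros i len Hi. rewrite rsum_add.
  specialize (HN1 i len ltac:(lia)). specialize (HN2 i len ltac:(lia)). lra.
Qed.

Lemma CS_scal : forall c f, 0 <= c -> CS f -> CS (fun j => c * f j).
Proof.
  intros c f Hc [F0 F1]. split; [intros j; specialize (F0 j); nra|].
  intros eps He. destruct (F1 (eps/(c+1))) as [N HN].
  { apply Rdiv_lt_0_compat; lra. }
  exists N. intros i len Hi. rewrite rsum_scal. specialize (HN i len Hi).
  pose proof (rsum_nonneg f i len F0).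
  assert (c * rsum f i len <= (c+1) * (eps / (c+1))) by nra.
  replace ((c+1) * (eps / (c+1))) with eps in H0 by (field; lra). lra.
Qed.

Lemma CS_shift : forall f k, CS f -> CS (fun j => f (j - k)%nat).
Proof.
  intros f k [F0 F1]. split; [intros j; apply F0|].
  intros eps He. destruct (F1 eps He) as [N HN]. exists (N + k)%nat.
  intros i len Hi. rewrite rsum_shift by lia. apply HN. lia.
Qed.

Fixpoint winsum (f : nat -> R) (L j : nat) : R :=
  match L with O => 0 | S L' => winsum f L' j + f (j - S L')%nat end.

Lemma CS_winsum : forall f L, CS f -> CS (fun j => winsum f L j).
Proof.
  intros f L Hf. induction L; simpl.
  - split; [intros; lra|]. intros eps He. exists O. intros i len _.
    induction len; simpl; lra.
  - apply CS_add; auto. apply CS_shift; auto.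
Qed.

Lemma winsum_nonneg : forall f L j, (forall j, 0 <= f j) -> 0 <= winsum f L j.
Proof. intros f L j H; induction L; simpl; [lra|]. specialize (H (j - S L)%nat); lra. Qed.

Lemma winsum_ge : forall f L j k, (forall j, 0 <= f j) -> (1 <= k <= L)%nat ->
  f (j - k)%nat <= winsum f L j.
Proof.
  intros f L j k H Hk. induction L; [lia|]. simpl.
  destruct (Nat.eq_dec k (S L)).
  - subst. pose proof (winsum_nonneg f L j H). lra.
  - specialize (IHL ltac:(lia)). specialize (H (j - S L)%nat). lra.
Qed.

Lemma CS_point : forall f, CS f -> forall eps, 0 < eps -> exists N, forall j, (N <= j)%nat -> f j <= eps.
Proof.
  intros f [F0 F1] eps He. destruct (F1 eps He) as [N HN]. exists N. intros j Hj.
  specialize (HN j 1%nat Hj). simpl in HN. rewrite Nat.add_0_r in HN. lra.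
Qed.

Lemma rsum_sum_n_m : forall f i l, rsum f i (S l) = sum_n_m f i (i + l).
Proof.
  intros f i l. induction l.
  - simpl. rewrite Nat.add_0_r, sum_n_n. ring.
  - change (rsum f i (S (S l))) with (rsum f i (S l) + f (i + S l)%nat).
    rewrite IHl, Nat.add_succ_r, sum_n_Sm by lia. reflexivity.
Qed.

Lemma CS_of_series : forall f, (forall j, 0 <= f j) -> ex_series f -> CS f.
Proof.
  intros f H0 Hs0. split; auto. pose proof (@Cauchy_ex_series R_AbsRing R_CompleteNormedModule f Hs0) as Hs.
  intros eps He. destruct (Hs (mkposreal eps He)) as [N HN]. exists N.
  intros i len Hi. destruct len; [simpl; lra|].
  rewrite rsum_sum_n_m. specialize (HN i (i + len)%nat Hi ltac:(lia)).
  simpl in HN. unfold norm in HN; simpl in HN. unfold abs in HN; simpl in HN.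
  apply Rlt_le. eapply Rle_lt_trans; [apply Rle_abs|]. exact HN.
Qed.

Definition Good (x : nat -> R) (L j0 : nat) (e0 : R) (eta : nat -> R) : Prop :=
  (forall j M, (j0 <= j)%nat -> (forall k, (j - L <= k < j)%nat -> x k <= M) ->
     x j <= M - e0 * (M - x (j - 1)%nat) + eta j) /\
  (forall j M, (j0 <= j)%nat -> (forall k, (j - L <= k < j)%nat -> M <= x k) ->
     M + e0 * (x (j - 1)%nat - M) - eta j <= x j).

Lemma Good_opp : forall x L j0 e0 eta, Good x L j0 e0 eta -> Good (fun k => - x k) L j0 e0 eta.
Proof.
  intros x L j0 e0 eta [Hu Hl]. split.
  - intros j M Hj HM. assert (H := Hl j (- M) Hj). 
    assert (H' : forall k, (j - L <= k < j)%nat -> - M <= x k).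
    { intros k Hk. specialize (HM k Hk). lra. }
    specialize (H H'). lra.
  - intros j M Hj HM. assert (H := Hu j (- M) Hj).
    assert (H' : forall k, (j - L <= k < j)%nat -> x k <= - M).
    { intros k Hk. specialize (HM k Hk). lra. }
    specialize (H H'). lra.
Qed.

Definition Win (x : nat -> R) (L i : nat) (lo hi : R) : Prop :=
  forall k, (i <= k < i + L)%nat -> lo <= x k <= hi.

Lemma rsum_mono : forall f i n, (forall j, 0 <= f j) -> rsum f i n <= rsum f i (S n).
Proof. intros f i n H. simpl. specialize (H (i + n)%nat). lra. Qed.

Lemma rsum_mono_le : forall f i n m, (forall j, 0 <= f j) -> (n <= m)%nat -> rsum f i n <= rsum f i m.
Proof.
  intros f i n m H Hnm. induction Hnm; [lra|].
  eapply Rle_trans; [apply IHHnm|]. apply rsum_mono; auto.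
Qed.

Lemma rsum_term : forall f i len q, (forall j, 0 <= f j) -> (q < len)%nat -> f (i + q)%nat <= rsum f i len.
Proof.
  intros f i len q H Hq. induction len; [lia|].
  simpl. destruct (Nat.eq_dec q len).
  - subst. pose proof (rsum_nonneg f i len H). lra.
  - specialize (IHlen ltac:(lia)). specialize (H (i + len)%nat). lra.
Qed.

Section Conv.
Variables (L j0 : nat) (e0 : R) (eta : nat -> R).
Hypothesis HL : (1 <= L)%nat.
Hypothesis He0 : 0 < e0 <= 1.
Hypothesis Heta : forall j, 0 <= eta j.

Lemma drift : forall x, Good x L j0 e0 eta -> forall i lo hi, (j0 <= i)%nat -> Win x L i lo hi ->
  forall n k, (i <= k < i + L + n)%nat ->
    lo - rsum eta (i + L) n <= x k <= hi + rsum eta (i + L) n.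
Proof.
  intros x [Hu Hl] i lo hi Hi HW n. induction n; intros k Hk.
  - simpl. rewrite Rminus_0_r, Rplus_0_r. apply HW. lia.
  - destruct (Nat.eq_dec k (i + L + n)%nat) as [E|E].
    + subst k. simpl rsum.
      assert (Hwin : forall k', (i + L + n - L <= k' < i + L + n)%nat ->
                 lo - rsum eta (i + L) n <= x k' <= hi + rsum eta (i + L) n).
      { intros k' Hk'. apply IHn. lia. }
      assert (Hprev := Hwin (i + L + n - 1)%nat ltac:(lia)).
      split.
      * assert (H := Hl (i + L + n)%nat (lo - rsum eta (i + L) n) ltac:(lia)
                   (fun k' Hk' => proj1 (Hwin k' Hk'))).
        replace (i + L + n)%nat with (i + L + n)%nat in H by lia.
        rewrite <- (Nat.add_assoc i L n) in *. nra.
      * assert (H := Hu (i + L + n)%nat (hi + rsum eta (i + L) n) ltac:(lia)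
                   (fun k' Hk' => proj2 (Hwin k' Hk'))).
        rewrite <- (Nat.add_assoc i L n) in *. nra.
    + specialize (IHn k ltac:(lia)). pose proof (rsum_mono eta (i + L) n Heta). lra.
Qed.

Definition cc := e0 ^ L / 2.

Lemma e0_pow_le : forall p, (p <= L)%nat -> e0 ^ L <= e0 ^ p.
Proof.
  intros p Hp. replace L with (p + (L - p))%nat by lia. rewrite pow_add.
  assert (0 <= e0 ^ p) by (apply pow_le; lra).
  assert (e0 ^ (L - p) <= 1).
  { rewrite <- (pow1 (L - p)). apply pow_incr. lra. }
  nra.
Qed.

Lemma contractA : forall x, Good x L j0 e0 eta -> forall i lo hi, (j0 <= i)%nat -> Win x L i lo hi ->
  (lo + hi) / 2 <= x (i + L)%nat ->
  Win x L (i + L) (lo + cc * (hi - lo) - 2 * INR L * rsum eta (i + L) L) (hi + rsum eta (i + L) L).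
Proof.
  intros x HG i lo hi Hi HW Hmid.
  set (tau := rsum eta (i + L) L).
  assert (Htau : 0 <= tau) by (apply rsum_nonneg; auto).
  assert (HD : lo <= hi) by (destruct (HW i ltac:(lia)); lra).
  assert (Hdr := drift x HG i lo hi Hi HW L). fold tau in Hdr.
  assert (Hclaim : forall p, (p < L)%nat ->
     lo + e0 ^ p * (hi - lo) / 2 - 2 * INR (S p) * tau <= x (i + L + p)%nat).
  { induction p; intros Hp.
    - rewrite Nat.add_0_r. simpl. lra.
    - specialize (IHp ltac:(lia)).
      destruct HG as [_ Hl].
      assert (Hwin : forall k', (i + L + S p - L <= k' < i + L + S p)%nat -> lo - tau <= x k').
      { intros k' Hk'. apply Hdr. lia. }
      assert (H := Hl (i + L + S p)%nat (lo - tau) ltac:(lia) Hwin).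
      replace (i + L + S p - 1)%nat with (i + L + p)%nat in H by lia.
      assert (Het : eta (i + L + S p)%nat <= tau).
      { unfold tau. replace (i + L + S p)%nat with (i + L + S p)%nat by lia.
        apply rsum_term; auto. }
      assert (Hpow : 0 <= e0 ^ p) by (apply pow_le; lra).
      rewrite !S_INR in *. simpl pow.
      assert (0 <= INR p) by apply pos_INR.
      set (y := x (i + L + p)%nat) in *.
      assert (e0 * (y - (lo - tau)) >= e0 * (e0 ^ p * (hi - lo) / 2 - (2 * INR p + 1) * tau)).
      { apply Rle_ge, Rmult_le_compat_l; lra. }
      assert (e0 * ((2 * INR p + 1) * tau) <= (2 * INR p + 1) * tau).
      { assert (0 <= (2 * INR p + 1) * tau) by nra. nra. }
      nra. }
  intros k Hk. split.
  - replace k with (i + L + (k - (i + L)))%nat by lia.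
    assert (Hp : (k - (i + L) < L)%nat) by lia.
    specialize (Hclaim _ Hp).
    pose proof (e0_pow_le (k - (i + L)) ltac:(lia)).
    assert (INR (S (k - (i + L))) <= INR L) by (apply le_INR; lia).
    unfold cc. nra.
  - apply Hdr. lia.
Qed.

Lemma Win_opp : forall x i lo hi, Win x L i lo hi -> Win (fun k => - x k) L i (- hi) (- lo).
Proof. intros x i lo hi H k Hk. specialize (H k Hk). lra. Qed.

Lemma step : forall x, Good x L j0 e0 eta -> forall i lo hi, (j0 <= i)%nat -> Win x L i lo hi ->
  exists lo' hi', Win x L (i + L) lo' hi' /\
    hi' - lo' <= (1 - cc) * (hi - lo) + (2 * INR L + 1) * rsum eta (i + L) L.
Proof.
  intros x HG i lo hi Hi HW.
  destruct (Rle_lt_dec ((lo + hi) / 2) (x (i + L)%nat)) as [H|H].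
  - eexists; eexists; split; [apply (contractA x HG i lo hi Hi HW H)|]. lra.
  - assert (H' : (- hi + - lo) / 2 <= - x (i + L)%nat) by lra.
    pose proof (contractA _ (Good_opp x L j0 e0 eta HG) i (- hi) (- lo) Hi (Win_opp x i lo hi HW) H') as HC.
    exists (- (- lo + rsum eta (i + L) L)).
    exists (- (- hi + cc * (- lo - - hi) - 2 * INR L * rsum eta (i + L) L)).
    split.
    + intros k Hk. specialize (HC k Hk). simpl in HC. lra.
    + lra.
Qed.

End Conv.

Lemma conv_cauchy : forall x L j0 e0 eta B, (1 <= L)%nat -> 0 < e0 <= 1 -> CS eta ->
  (forall k, Rabs (x k) <= B) -> Good x L j0 e0 eta -> Cauchy_crit x.
Proof.
  intros x L j0 e0 eta B HL He0 [Heta0 Heta1] HB HG eps Heps.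
  set (c := cc L e0).
  assert (Hc : 0 < c <= 1/2).
  { unfold c, cc. assert (0 < e0 ^ L) by (apply pow_lt; lra).
    assert (e0 ^ L <= 1) by (rewrite <- (pow1 L); apply pow_incr; lra). lra. }
  set (K := 2 * INR L + 1).
  assert (HK : 1 <= K) by (unfold K; pose proof (pos_INR L); lra).
  assert (HB0 : 0 <= B) by (specialize (HB O); pose proof (Rabs_pos (x O)); lra).
  set (rho := Rmin (eps * c / (4 * K)) (eps / 8)).
  assert (Hrho0 : 0 < rho).
  { unfold rho, Rmin. destruct (Rle_dec _ _).
    - apply Rdiv_lt_0_compat; nra.
    - lra. }
  assert (Hrho1 : K * rho / c <= eps / 4).
  { assert (rho <= eps * c / (4 * K)) by apply Rmin_l.
    apply (Rmult_le_reg_r c); [lra|]. unfold Rdiv.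
    rewrite Rmult_assoc, Rinv_l by lra. rewrite Rmult_1_r.
    apply (Rmult_le_reg_r (/K)); [apply Rinv_0_lt_compat; lra|].
    replace (K * rho * / K) with rho by (field; lra).
    replace (eps * / 4 * c * / K) with (eps * c / (4 * K)) by (field; lra). lra. }
  assert (Hrho2 : rho <= eps / 8) by apply Rmin_r.
  destruct (Heta1 rho Hrho0) as [N0 HN0].
  set (I0 := (N0 + j0)%nat).
  assert (Hiter : forall n, exists lo hi, Win x L (I0 + n * L) lo hi /\
            hi - lo <= (1 - c) ^ n * (2 * B) + K * rho / c).
  { induction n.
    - exists (- B), B. split.
      + intros k _. specialize (HB k). unfold Rabs in HB; destruct (Rcase_abs (x k)); lra.
      + simpl. assert (0 <= K * rho / c) by (apply Rdiv_le_0_compat; nra). lra.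
    - destruct IHn as [lo [hi [HW Hw]]].
      destruct (step L j0 e0 eta HL He0 Heta0 x HG (I0 + n * L) lo hi ltac:(unfold I0; lia) HW)
        as [lo' [hi' [HW' Hw']]].
      exists lo', hi'. split.
      + replace (I0 + S n * L)%nat with (I0 + n * L + L)%nat by (simpl; lia). exact HW'.
      + fold c in Hw'. fold K in Hw'.
        assert (rsum eta (I0 + n * L + L) L <= rho) by (apply HN0; unfold I0; lia).
        simpl pow.
        assert ((1 - c) * (hi - lo) <= (1 - c) * ((1 - c) ^ n * (2 * B) + K * rho / c))
          by (apply Rmult_le_compat_l; lra).
        assert (K * rho / c * c = K * rho) by (field; lra).
        nra. }
  destruct (pow_lt_1_zero (1 - c) ltac:(rewrite Rabs_right; lra) (eps / (4 * (2 * B + 1))))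
    as [k Hk].
  { apply Rdiv_lt_0_compat; lra. }
  specialize (Hk k (le_n k)). rewrite Rabs_right in Hk by (apply Rle_ge, pow_le; lra).
  destruct (Hiter k) as [lo [hi [HW Hw]]].
  assert (Hw2 : hi - lo <= eps / 2).
  { assert ((1 - c) ^ k * (2 * B) <= eps / 4).
    { assert ((1 - c) ^ k * (2 * B + 1) <= eps / 4).
      { apply Rlt_le. apply (Rmult_lt_reg_r (/ (2 * B + 1))). apply Rinv_0_lt_compat; lra.
        replace ((1 - c) ^ k * (2 * B + 1) * / (2 * B + 1)) with ((1 - c) ^ k) by (field; lra).
        replace (eps / 4 * / (2 * B + 1)) with (eps / (4 * (2 * B + 1))) by (field; lra). lra. }
      assert (0 <= (1 - c) ^ k) by (apply pow_le; lra). nra. }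
    lra. }
  set (i := (I0 + k * L)%nat).
  exists i. intros n m Hn Hm.
  assert (Hd := drift L j0 e0 eta HL He0 Heta0 x HG i lo hi ltac:(unfold i, I0; lia) HW).
  assert (Hr : forall q, rsum eta (i + L) q <= rho) by (intros; apply HN0; unfold i, I0; lia).
  destruct (Hd n n ltac:(lia)) as [A1 A2].
  destruct (Hd m m ltac:(lia)) as [B1 B2].
  pose proof (Hr n). pose proof (Hr m).
  unfold Rdist. unfold Rabs. destruct (Rcase_abs _); lra.
Qed.

Definition phi (c z : C) : R := fst (Cmult c z).

Lemma phi_add : forall c z w, phi c (Cplus z w) = phi c z + phi c w.
Proof. intros c [x1 y1] [x2 y2]; destruct c; unfold phi; simpl; ring. Qed.

Lemma phi_scal : forall c r z, phi c (Cmult (RtoC r) z) = r * phi c z.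
Proof. intros [c1 c2] r [x y]; unfold phi; simpl; ring. Qed.

Lemma phi_0 : forall c, phi c (RtoC 0) = 0.
Proof. intros [c1 c2]; unfold phi; simpl; ring. Qed.

Lemma phi_opp : forall c z, phi (Copp c) z = - phi c z.
Proof. intros [c1 c2] [x y]; unfold phi; simpl; ring. Qed.

Lemma fst_le_Cmod : forall z : C, fst z <= Cmod z.
Proof.
  intros z. pose proof (Rmax_Cmod z). eapply Rle_trans; [|exact H].
  eapply Rle_trans; [apply Rle_abs|apply Rmax_l].
Qed.

Lemma phi_le : forall c z, Cmod c <= 1 -> phi c z <= Cmod z.
Proof.
  intros c z Hc. unfold phi. eapply Rle_trans; [apply fst_le_Cmod|].
  rewrite Cmod_mult. pose proof (Cmod_ge_0 z). nra.
Qed.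

Lemma Cmod_le_sum : forall x y, Cmod (x, y) <= Rabs x + Rabs y.
Proof.
  intros x y. apply Cmod_le_pair.
  - pose proof (Rabs_pos x); pose proof (Rabs_pos y); lra.
  - unfold Rabs; destruct (Rcase_abs x); destruct (Rcase_abs y); nra.
Qed.

Section Main.
Variable a : nat -> nat.
Variable b : nat -> Z.
Variable alpha : R.
Hypothesis Hinc : strictly_increasing a.
Hypothesis Ha0 : a 0%nat = 1%nat.
Variable s : R.
Hypothesis Hs1 : 1 < s.
Hypothesis Hs : forall n, INR (a (S n)) < s * INR (a n).

Definition Sa := Ssum a b alpha.
Definition ra (k : nat) : R := INR (a k).
Definition dlt (k : nat) : R := Cmod (Cminus (e (alpha * IZR (b k))) (RtoC 1)).

Lemma ra_pos : forall k, 0 < ra k.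
Proof. intros k. unfold ra. apply lt_0_INR. pose proof (a_ge a Hinc Ha0 k). lia. Qed.

Lemma ra_mono : forall i j, (i <= j)%nat -> ra i <= ra j.
Proof. intros. unfold ra. apply le_INR. apply a_mono; auto. Qed.

Lemma ra_growth : forall p i, ra (i + p) <= s ^ p * ra i.
Proof.
  induction p; intros i.
  - rewrite Nat.add_0_r. simpl. lra.
  - rewrite Nat.add_succ_r. simpl pow. pose proof (Hs (i + p)%nat).
    specialize (IHp i). unfold ra in *. nra.
Qed.

Lemma dlt_nonneg : forall k, 0 <= dlt k.
Proof. intros; apply Cmod_ge_0. Qed.

Lemma split_err : forall (x z w : C), Cplus x (Cmult w z) = Cplus (Cplus x z) (Cmult (Cminus w (RtoC 1)) z).
Proof. intros. ring. Qed.

Lemma window_claim : forall c, Cmod c <= 1 -> forall m lo M D, 0 <= D ->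
  (forall j, In j (Rp a m) -> (lo <= j)%nat /\ dlt j <= D /\ phi c (Sa (a j)) <= ra j * M) ->
  phi c (Sa m) <= INR m * M + INR m * (INR m / ra lo) * D.
Proof.
  intros c Hc m. induction m as [m IH] using lt_wf_ind. intros lo M D HD Hj.
  destruct m as [|m0].
  - unfold Sa; simpl Ssum. rewrite phi_0. simpl. lra.
  - set (m := S m0) in *.
    assert (Hm : (1 <= m)%nat) by (unfold m; lia).
    pose proof (Tp_spec a Hinc Ha0 m Hm) as [T1 T2].
    set (N := Tp a m) in *.
    assert (HaN : (1 <= a N)%nat) by (pose proof (a_ge a Hinc Ha0 N); lia).
    set (m' := (m - a N)%nat).
    assert (Hblk : Sa m = Cplus (Sa (a N)) (Cmult (e (alpha * IZR (b N))) (Sa m'))).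
    { unfold Sa, m'. apply block; auto. lia. }
    assert (HR : Rp a m = N :: Rp a m') by (apply Rp_step; auto).
    destruct (Hj N ltac:(rewrite HR; left; reflexivity)) as [HlN [HdN HpN]].
    assert (IH' := IH m' ltac:(unfold m'; lia) lo M D HD
       (fun j Hin => Hj j ltac:(rewrite HR; right; exact Hin))).
    rewrite Hblk, split_err, !phi_add.
    assert (Herr : phi c (Cmult (Cminus (e (alpha * IZR (b N))) (RtoC 1)) (Sa m')) <= dlt N * INR m').
    { eapply Rle_trans; [apply phi_le; auto|]. rewrite Cmod_mult. fold (dlt N).
      apply Rmult_le_compat_l; [apply dlt_nonneg|]. apply Ssum_bound. }
    assert (Em : INR m = ra N + INR m') by (unfold m', ra; rewrite minus_INR by lia; ring).
    rewrite Em.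
    assert (Hlo : ra lo <= ra N) by (apply ra_mono; auto).
    pose proof (ra_pos lo). pose proof (pos_INR m').
    set (q := INR m') in *. set (rN := ra N) in *. set (rl := ra lo) in *.
    assert (Hineq : q * (q / rl) + q <= (rN + q) * ((rN + q) / rl)).
    { unfold Rdiv. assert (0 < / rl) by (apply Rinv_0_lt_compat; lra).
      assert (rl * / rl = 1) by (field; lra).
      assert (q * rl * / rl <= q * rN * / rl) by (apply Rmult_le_compat_r; [lra|]; nra).
      replace q with (q * rl * / rl) at 3 by (field; lra). nra. }
    assert (q * (q / rl) * D + q * D <= (rN + q) * ((rN + q) / rl) * D) by nra.
    assert (dlt N * q <= D * q) by nra.
    lra.
Qed.

End Main.

Section Main2.
Variable a : nat -> nat.
Variable b : nat -> Z.
Variable alpha : R.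
Hypothesis Hinc : strictly_increasing a.
Hypothesis Ha0 : a 0%nat = 1%nat.
Variable s : R.
Hypothesis Hs1 : 1 < s.
Hypothesis Hs : forall n, INR (a (S n)) < s * INR (a n).
Variable L : nat.
Hypothesis HL : (1 <= L)%nat.
Hypothesis Hrep : forall n, (1 <= n)%nat -> forall j, In j (greedy_rep a n (a n) (a n)) -> (n - L <= j)%nat.

Definition X (c : C) (i : nat) : R := phi c (Sa a b alpha (a i)) / ra a i.
Definition eta (i : nat) : R := s ^ L * winsum (dlt b alpha) L i + dlt b alpha (i - 1).

Lemma X_phi : forall c i, phi c (Sa a b alpha (a i)) = X c i * ra a i.
Proof. intros. unfold X. field. apply Rgt_not_eq, ra_pos; auto. Qed.

Lemma UB : forall c, Cmod c <= 1 -> forall j M, (L <= j)%nat ->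
  (forall k, (j - L <= k < j)%nat -> X c k <= M) ->
  X c j <= M - (1 / s) * (M - X c (j - 1)%nat) + eta j.
Proof.
  intros c Hc j M Hj HM.
  assert (Hj1 : (1 <= j)%nat) by lia.
  set (m := (a j - a (j - 1))%nat).
  assert (Hsj : S (j - 1) = j) by lia.
  assert (Hamono : (a (j - 1) < a j)%nat) by (apply a_smono; auto; lia).
  assert (Hblk : Sa a b alpha (a j) = Cplus (Sa a b alpha (a (j - 1)))
        (Cmult (e (alpha * IZR (b (j - 1)%nat))) (Sa a b alpha m))).
  { unfold Sa, m. apply block; auto. rewrite Hsj. lia. }
  set (D := winsum (dlt b alpha) L j).
  assert (HD : 0 <= D) by (apply winsum_nonneg, dlt_nonneg).
  assert (Hwin : phi c (Sa a b alpha m) <= INR m * M + INR m * (INR m / ra a (j - L)) * D).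
  { apply window_claim; auto.
    intros j' Hin.
    assert (Hin' : In j' (greedy_rep a j (a j) (a j))).
    { rewrite mild_rep by auto. right. exact Hin. }
    pose proof (Hrep j Hj1 j' Hin') as Hlo.
    pose proof (Rp_in a Hinc Ha0 m j' Hin) as Haj.
    assert (Hlt : (j' < j)%nat).
    { destruct (Nat.lt_ge_cases j' j); auto. pose proof (a_mono a Hinc Ha0 j j' H). unfold m in Haj. pose proof (a_ge a Hinc Ha0 (j - 1)). lia. }
    split; [exact Hlo|]. split.
    - unfold D. replace j' with (j - (j - j'))%nat at 1 by lia.
      apply winsum_ge; [apply dlt_nonneg|lia].
    - rewrite X_phi. pose proof (HM j' ltac:(lia)). pose proof (ra_pos a Hinc Ha0 j'). nra. }
  assert (Herr : phi c (Cmult (Cminus (e (alpha * IZR (b (j - 1)%nat))) (RtoC 1)) (Sa a b alpha m))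
                 <= dlt b alpha (j - 1) * INR m).
  { eapply Rle_trans; [apply phi_le; auto|]. rewrite Cmod_mult. fold (dlt b alpha (j - 1)).
    apply Rmult_le_compat_l; [apply dlt_nonneg|]. apply Ssum_bound. }
  assert (Hphi : phi c (Sa a b alpha (a j)) <= X c (j - 1) * ra a (j - 1) + 
       (INR m * M + INR m * (INR m / ra a (j - L)) * D) + dlt b alpha (j - 1) * INR m).
  { rewrite Hblk, split_err, !phi_add, X_phi. lra. }
  assert (Em : INR m = ra a j - ra a (j - 1)) by (unfold m, ra; rewrite minus_INR by lia; ring).
  assert (Hg : ra a j <= s ^ L * ra a (j - L)).
  { replace j with (j - L + L)%nat at 1 by lia. apply ra_growth; auto. }
  assert (Hg1 : ra a j < s * ra a (j - 1)).
  { unfold ra. rewrite <- Hsj at 1. apply Hs. }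
  pose proof (ra_pos a Hinc Ha0 j) as Pj. pose proof (ra_pos a Hinc Ha0 (j - 1)) as Pp.
  pose proof (ra_pos a Hinc Ha0 (j - L)) as Pl.
  assert (HxM : X c (j - 1) <= M) by (apply HM; lia).
  pose proof (dlt_nonneg b alpha (j - 1)) as Hdl.
  set (rj := ra a j) in *. set (rp := ra a (j - 1)) in *. set (rl := ra a (j - L)) in *.
  set (x := X c (j - 1)) in *. set (q := INR m) in *. set (dl := dlt b alpha (j - 1)) in *.
  assert (Hq0 : 0 <= q) by (unfold q; apply pos_INR).
  assert (H1 : rj / s <= rp).
  { apply (Rmult_le_reg_r s); [lra|]. unfold Rdiv. rewrite Rmult_assoc, Rinv_l by lra. lra. }
  assert (H2 : rp * (M - x) >= rj / s * (M - x)) by (apply Rle_ge, Rmult_le_compat_r; lra).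
  assert (H3 : q / rl <= s ^ L).
  { apply (Rmult_le_reg_r rl); [lra|]. unfold Rdiv. rewrite Rmult_assoc, Rinv_l by lra. lra. }
  assert (H4 : 0 <= q / rl) by (apply Rdiv_le_0_compat; lra).
  assert (H5 : q * (q / rl) * D <= rj * s ^ L * D).
  { apply Rmult_le_compat_r; auto. apply Rmult_le_compat; lra. }
  assert (H6 : dl * q <= dl * rj) by (apply Rmult_le_compat_l; lra).
  unfold X at 1. fold rj. 
  apply (Rmult_le_reg_r rj); [lra|]. unfold Rdiv. rewrite Rmult_assoc, Rinv_l by lra. rewrite Rmult_1_r.
  unfold eta. fold D. fold dl.
  replace ((M - 1 * / s * (M - x) + (s ^ L * D + dl)) * rj) with
     (rj * M - rj / s * (M - x) + rj * s ^ L * D + dl * rj) by (field; lra).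
  assert (E1 : rp * (M - x) = rp * M - x * rp) by ring.
  assert (E2 : q * M = rj * M - rp * M) by (rewrite Em; ring).
  lra.
Qed.

Lemma X_opp : forall c i, X (Copp c) i = - X c i.
Proof. intros. unfold X. rewrite phi_opp. field. apply Rgt_not_eq, ra_pos; auto. Qed.

Lemma X_Good : forall c, Cmod c <= 1 -> Good (X c) L L (1 / s) eta.
Proof.
  intros c Hc. split.
  - intros j M Hj HM. apply UB; auto.
  - intros j M Hj HM.
    assert (Hc' : Cmod (Copp c) <= 1) by (rewrite Cmod_opp; auto).
    assert (H := UB (Copp c) Hc' j (- M) Hj).
    assert (H' : forall k, (j - L <= k < j)%nat -> X (Copp c) k <= - M).
    { intros k Hk. rewrite X_opp. specialize (HM k Hk). lra. }
    specialize (H H'). rewrite !X_opp in H. lra.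
Qed.

Lemma X_bound : forall c, Cmod c <= 1 -> forall k, Rabs (X c k) <= 1.
Proof.
  intros c Hc k. unfold X. pose proof (ra_pos a Hinc Ha0 k) as P.
  unfold Rdiv. rewrite Rabs_mult, Rabs_inv, (Rabs_right (ra a k)) by lra.
  apply (Rmult_le_reg_r (ra a k)); [lra|]. rewrite Rmult_assoc, Rinv_l by lra.
  rewrite Rmult_1_r, Rmult_1_l.
  assert (Hb : Cmod (Sa a b alpha (a k)) <= ra a k) by apply Ssum_bound.
  assert (phi c (Sa a b alpha (a k)) <= Cmod (Sa a b alpha (a k))) by (apply phi_le; auto).
  assert (- phi c (Sa a b alpha (a k)) <= Cmod (Sa a b alpha (a k))).
  { rewrite <- phi_opp. apply phi_le. rewrite Cmod_opp; auto. }
  unfold Rabs; destruct (Rcase_abs _); lra.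
Qed.

End Main2.

Lemma RtoC_plus' : forall x y, RtoC (x + y) = Cplus (RtoC x) (RtoC y).
Proof. intros. unfold RtoC, Cplus; simpl. f_equal; ring. Qed.

Lemma Cmod_minus_le : forall x y, Cmod (Cminus x y) <= Cmod x + Cmod y.
Proof.
  intros. unfold Cminus. eapply Rle_trans; [apply Cmod_triangle|]. rewrite Cmod_opp. lra.
Qed.

Section Final.
Variable a : nat -> nat.
Variable b : nat -> Z.
Variable alpha : R.
Hypothesis Hinc : strictly_increasing a.
Hypothesis Ha0 : a 0%nat = 1%nat.
Variable s : R.
Hypothesis Hs1 : 1 < s.
Hypothesis Hs : forall n, INR (a (S n)) < s * INR (a n).

Lemma tail_bound : forall (u : C) K eps, 0 <= eps ->
  (forall N, (K <= N)%nat -> Cmod (Cminus (Sa a b alpha (a N)) (Cmult (RtoC (ra a N)) u)) <= eps / 2 * ra a N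
        /\ dlt b alpha N <= eps / (2 * s)) ->
  forall n, Cmod (Cminus (Sa a b alpha n) (Cmult (RtoC (INR n)) u)) <= eps * INR n + (1 + Cmod u) * ra a K.
Proof.
  intros u K eps Heps HK n. induction n as [n IH] using lt_wf_ind.
  pose proof (Cmod_ge_0 u) as Hu.
  destruct (Nat.lt_ge_cases n (a K)) as [Hn|Hn].
  - eapply Rle_trans; [apply Cmod_minus_le|].
    rewrite Cmod_mult, Cmod_R, Rabs_right by (apply Rle_ge, pos_INR).
    pose proof (Ssum_bound a b alpha n). fold (Sa a b alpha n) in H.
    assert (INR n <= ra a K) by (unfold ra; apply le_INR; lia).
    pose proof (pos_INR n). nra.
  - assert (Hn1 : (1 <= n)%nat) by (pose proof (a_ge a Hinc Ha0 K); lia).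
    pose proof (Tp_spec a Hinc Ha0 n Hn1) as [T1 T2].
    set (N := Tp a n) in *.
    assert (HKN : (K <= N)%nat).
    { destruct (Nat.le_gt_cases K N); auto. pose proof (a_mono a Hinc Ha0 (S N) K H). lia. }
    set (n' := (n - a N)%nat).
    assert (Hblk : Sa a b alpha n = Cplus (Sa a b alpha (a N)) (Cmult (e (alpha * IZR (b N))) (Sa a b alpha n'))).
    { unfold Sa, n'. apply block; auto. lia. }
    assert (En : INR n = ra a N + INR n') by (unfold n', ra; rewrite minus_INR by lia; ring).
    assert (Hid : Cminus (Sa a b alpha n) (Cmult (RtoC (INR n)) u) =
       Cplus (Cplus (Cminus (Sa a b alpha (a N)) (Cmult (RtoC (ra a N)) u))
                    (Cminus (Sa a b alpha n') (Cmult (RtoC (INR n')) u)))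
             (Cmult (Cminus (e (alpha * IZR (b N))) (RtoC 1)) (Sa a b alpha n'))).
    { rewrite Hblk, En, RtoC_plus'. ring. }
    rewrite Hid.
    destruct (HK N HKN) as [H1 H2].
    assert (IH' := IH n' ltac:(unfold n'; pose proof (a_ge a Hinc Ha0 N); lia)).
    assert (H3 : Cmod (Cmult (Cminus (e (alpha * IZR (b N))) (RtoC 1)) (Sa a b alpha n')) <= dlt b alpha N * INR n').
    { rewrite Cmod_mult. fold (dlt b alpha N). apply Rmult_le_compat_l; [apply dlt_nonneg|]. apply Ssum_bound. }
    assert (Hn' : INR n' <= s * ra a N).
    { assert (INR n < INR (a (S N))) by (apply lt_INR; lia). pose proof (Hs N).
      unfold ra in *. pose proof (pos_INR (a N)). lra. }
    assert (H4 : dlt b alpha N * INR n' <= eps / 2 * ra a N).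
    { pose proof (dlt_nonneg b alpha N). pose proof (pos_INR n').
      apply Rle_trans with (eps / (2 * s) * (s * ra a N)).
      - apply Rmult_le_compat; lra.
      - right. field. lra. }
    eapply Rle_trans; [apply Cmod_triangle|].
    eapply Rle_trans; [apply Rplus_le_compat_r, Cmod_triangle|].
    rewrite En. lra.
Qed.

End Final.

Lemma dist_int_nonneg : forall x, 0 <= dist_int x.
Proof.
  intros x. pose proof (base_Int_part x) as [B1 B2]. unfold dist_int, frac_part, Rmin.
  destruct (Rle_dec _ _); lra.
Qed.

Theorem mainTheorem5 (a : nat -> nat) (b : nat -> Z) (alpha : R) :
  mild_signature a ->
  ex_series (fun i => dist_int (alpha * IZR (b i))) ->
  exists l : C, filterlim (weyl_sum (replacement a b) alpha) eventually (locally l).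
Proof.
  intros Hm Hser.
  destruct Hm as [Hinc [Ha0 [[L0 HL0] [r [s [Hr1 [Hs1 Hg]]]]]]].
  set (L := S L0).
  assert (HL : (1 <= L)%nat) by (unfold L; lia).
  assert (Hrep : forall n, (1 <= n)%nat -> forall j, In j (greedy_rep a n (a n) (a n)) -> (n - L <= j)%nat).
  { intros n Hn j Hj. specialize (HL0 n Hn j Hj). unfold L. lia. }
  assert (Hs : forall n, INR (a (S n)) < s * INR (a n)) by (intros n; apply Hg).
  assert (Hdist : CS (fun i => dist_int (alpha * IZR (b i)))).
  { apply CS_of_series; auto. intros; apply dist_int_nonneg. }
  assert (Hdlt : CS (dlt b alpha)).
  { apply CS_le with (f := fun j => 2 * PI * dist_int (alpha * IZR (b j))).
    - intros j. split; [apply dlt_nonneg|]. apply delta_bound.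
    - apply CS_scal; auto. pose proof PI_RGT_0; lra. }
  assert (Heta : CS (eta b alpha s L)).
  { unfold eta. apply CS_add.
    - apply CS_scal. apply pow_le; lra. apply CS_winsum; auto.
    - apply CS_shift; auto. }
  assert (He0 : 0 < 1 / s <= 1).
  { split. apply Rdiv_lt_0_compat; lra.
    apply (Rmult_le_reg_r s); [lra|]. unfold Rdiv. rewrite Rmult_assoc, Rinv_l by lra. lra. }
  set (c1 := RtoC 1). set (c2 := (0, -1) : C).
  assert (Hc1 : Cmod c1 <= 1) by (apply Cmod_le_pair; lra).
  assert (Hc2 : Cmod c2 <= 1) by (apply Cmod_le_pair; lra).
  destruct (Rcomplete.R_complete _ (conv_cauchy _ L L (1 / s) _ 1 HL He0 Heta
     (X_bound a b alpha Hinc Ha0 c1 Hc1) (X_Good a b alpha Hinc Ha0 s Hs1 Hs L HL Hrep c1 Hc1))) as [l1 Hl1].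
  destruct (Rcomplete.R_complete _ (conv_cauchy _ L L (1 / s) _ 1 HL He0 Heta
     (X_bound a b alpha Hinc Ha0 c2 Hc2) (X_Good a b alpha Hinc Ha0 s Hs1 Hs L HL Hrep c2 Hc2))) as [l2 Hl2].
  set (u := (l1, l2) : C).
  assert (Hv : forall eps, 0 < eps -> exists K, forall N, (K <= N)%nat ->
     Cmod (Cminus (Sa a b alpha (a N)) (Cmult (RtoC (ra a N)) u)) <= eps * ra a N).
  { intros eps Heps.
    destruct (Hl1 (eps / 2) ltac:(lra)) as [K1 HK1].
    destruct (Hl2 (eps / 2) ltac:(lra)) as [K2 HK2].
    exists (K1 + K2)%nat. intros N HN.
    specialize (HK1 N ltac:(lia)). specialize (HK2 N ltac:(lia)).
    unfold Rdist, X, phi in HK1, HK2.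
    pose proof (ra_pos a Hinc Ha0 N) as P.
    destruct (Sa a b alpha (a N)) as [p1 p2].
    unfold c1, c2, u, RtoC, Cminus, Cmult, Cplus, Copp in *. simpl in *.
    eapply Rle_trans; [apply Cmod_le_sum|].
    replace (p1 + - (ra a N * l1 - 0 * l2)) with (ra a N * ((1 * p1 - 0 * p2) / ra a N - l1)) by (field; lra).
    replace (p2 + - (ra a N * l2 + 0 * l1)) with (ra a N * ((0 * p1 - -1 * p2) / ra a N - l2)) by (field; lra).
    rewrite !Rabs_mult, Rabs_right by lra. nra. }
  exists u.
  apply filterlim_locally. intros eps.
  pose proof (cond_pos eps) as Heps.
  destruct (Hv (pos eps / 4) ltac:(lra)) as [K1 HK1].
  destruct (CS_point _ Hdlt (pos eps / 4 / (2 * s))) as [K2 HK2].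
  { apply Rdiv_lt_0_compat; lra. }
  set (K := (K1 + K2)%nat).
  assert (HT := tail_bound a b alpha Hinc Ha0 s Hs1 Hs u K (pos eps / 2) ltac:(lra)).
  assert (HT' : forall n, Cmod (Cminus (Sa a b alpha n) (Cmult (RtoC (INR n)) u))
                  <= pos eps / 2 * INR n + (1 + Cmod u) * ra a K).
  { apply HT. intros N HN. split.
    - replace (pos eps / 2 / 2) with (pos eps / 4) by field. apply HK1. unfold K in HN; lia.
    - replace (pos eps / 2 / (2 * s)) with (pos eps / 4 / s) by (field; lra).
      eapply Rle_trans; [apply HK2; unfold K in HN; lia|].
      unfold Rdiv. apply Rmult_le_compat_l; [lra|].
      apply Rinv_le_contravar; lra. }
  set (H0 := (1 + Cmod u) * ra a K).
  assert (HH0 : 0 <= H0).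
  { unfold H0. pose proof (Cmod_ge_0 u). pose proof (ra_pos a Hinc Ha0 K). nra. }
  destruct (archimed (4 * H0 / pos eps)) as [Z1 _].
  exists (S (Z.to_nat (up (4 * H0 / pos eps)))).
  intros n Hn.
  apply (@norm_compat1 C_AbsRing C_NormedModule).
  change (Cmod (Cminus (weyl_sum (replacement a b) alpha n) u) < pos eps).
  change (replacement a b) with (Aa a b).
  rewrite weyl_eq.
  assert (Hnpos : 0 < INR n) by (apply lt_0_INR; lia).
  assert (Hnbig : 4 * H0 / pos eps < INR n).
  { eapply Rlt_le_trans; [exact Z1|].
    assert (IZR (up (4 * H0 / pos eps)) <= INR (Z.to_nat (up (4 * H0 / pos eps)))).
    { rewrite INR_IZR_INZ. apply IZR_le. lia. }
    assert (INR (Z.to_nat (up (4 * H0 / pos eps))) <= INR n) by (apply le_INR; lia).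
    lra. }
  assert (Hrw : Cminus (Cmult (RtoC (/ INR n)) (Ssum a b alpha n)) u =
          Cmult (RtoC (/ INR n)) (Cminus (Sa a b alpha n) (Cmult (RtoC (INR n)) u))).
  { unfold Sa. apply injective_projections; simpl; field; lra. }
  rewrite Hrw, Cmod_mult, Cmod_R, Rabs_right by (apply Rle_ge, Rlt_le, Rinv_0_lt_compat; lra).
  specialize (HT' n).
  apply (Rmult_lt_reg_l (INR n)); [lra|].
  rewrite <- Rmult_assoc, Rinv_r, Rmult_1_l by lra.
  assert (H0 < pos eps / 4 * INR n).
  { apply (Rmult_lt_reg_r (4 / pos eps)). apply Rdiv_lt_0_compat; lra.
    replace (pos eps / 4 * INR n * (4 / pos eps)) with (INR n) by (field; lra).
    replace (H0 * (4 / pos eps)) with (4 * H0 / pos eps) by (field; lra). lra. }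
  fold H0 in HT'. nra.
Qed.
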